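(* In the setting described in the context, let $M^s\subseteq M_{k+n}$ and $w^{m,s}_{k+n}=\sum_{r\in M^s}w^r_{k+n}$. Then $$w^{m,s}_{k+n}\;\le\;\eta_{k+n}\;\le\;w^{m,s}_{k+n}+\Big(\frac{|M_{k+n}|}{|M_k|}-\sum_{r\in M^s}w_k^{r}\Big)\prod_{i=1}^{n}\sigma^i,$$ where $w_k^r$ denotes the prior weight $w_k^{a(r)}$ of the time-$k$ ancestor $a(r)$ of $r$, with repeated ancestors counted with multiplicity.
   Context: Setting (data-association-aware planning over a horizon $n\ge1$ from time $k$). The belief at time $k$ is a mixture over a finite nonempty set $M_k$ of hypotheses, with weights $w_k^j\ge0$ satisfying $\sum_{j\in M_k}w_k^j=1$. Let $D$ be a finite set of data-association realizations. At each look-ahead step $i=1,\dots,n$, every hypothesis $j$ at step $i-1$ spawns exactly $|D|$ child hypotheses $(j,\beta)$, one for each $\beta\in D$. Hence the set $M_{k+n}$ of hypotheses at step $n$ has $|M_{k+n}|=|M_k||D|^n$ elements, and each $r\in M_{k+n}$ has a unique ancestor $a(r)\in M_k$. Fix a sequence of future actions and future observations $Z_{k+1},\dots,Z_{k+n}$ (one path of the belief tree). The unnormalized hypothesis weights are defined recursively by the Bayesian weight update $$w_{k+i}^{(j,\beta)}=w_{k+i-1}^{j}\int \mathbb{P}(Z_{k+i}\mid x_{k+i},\beta)\,\mathbb{P}(\beta\mid x_{k+i})\,b^{j}_{k+i}(x_{k+i})\,dx_{k+i}.$$ Here $b^j_{k+i}$ is the probability density of the state $x_{k+i}$ under hypothesis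 $j$, propagated by the motion model; $\mathbb{P}(\beta\mid x_{k+i})\in[0,1]$; and $\mathbb{P}(Z_{k+i}\mid x_{k+i},\beta)$ is the measurement likelihood. Let $\sigma^i=\max\mathbb{P}(Z_{k+i}\mid x_{k+i})$ denote the maximum of the measurement likelihood of $Z_{k+i}$ over states (and associations), assumed finite. Finally, $\eta_{k+n}=\sum_{r\in M_{k+n}}w_{k+n}^r$. *)

(* Defs.v *)
From HB Require Import structures.
From mathcomp Require Import all_boot all_order all_algebra.
From mathcomp Require Import all_classical all_reals all_analysis.
Set Implicit Arguments. Unset Strict Implicit. Unset Printing Implicit Defensive.
Import Order.TTheory GRing.Theory Num.Theory.
Local Open Scope ring_scope.
Local Open Scope ereal_scope.

(* Hypotheses at look-ahead step i are pairs (a, s) with a : Mk the time-k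
   ancestor and s : i.-tuple D the associations realized so far, the most
   recent one at the HEAD of s.  The child (j, beta) of j = (a, s) is
   (a, beta :: s).

   Parameters (for the fixed path of actions/observations):
   - w0 j        : prior weight w_k^j
   - L i beta x  : measurement likelihood P(Z_{k+i} | x_{k+i} = x, beta)
   - Pb i beta x : P(beta | x_{k+i} = x)
   - b i a s x   : density b^{(a,s)}_{k+i}(x) of x_{k+i} under the parent
                   hypothesis (a,s) at step i-1 (s : (i-1)-tuple), w.r.t. mu. *)
Fixpoint hyp_weight {d} {T : measurableType d} {R : realType}
  {Mk D : finType} (mu : {measure set T -> \bar R}) (w0 : Mk -> R)
  (L : nat -> D -> T -> R) (Pb : nat -> D -> T -> R)
  (b : forall i : nat, Mk -> (i.-1).-tuple D -> T -> R)
  (i : nat) : Mk -> i.-tuple D -> \bar R :=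
  match i return Mk -> i.-tuple D -> \bar R with
  | 0 => fun a _ => (w0 a)%:E
  | i'.+1 => fun a t =>
      hyp_weight mu w0 L Pb b a (behead_tuple t) *
      \int[mu]_x (L i'.+1 (thead t) x * Pb i'.+1 (thead t) x
                   * b i'.+1 a (behead_tuple t) x)%:E
  end.

Definition is_max_of {R : realType} {A B : Type} (f : A -> B -> R) (s : R) :=
  (forall a x, (f a x <= s)%R) /\ exists a x, f a x = s.

(* Main.v *)
Require Import Defs.
From HB Require Import structures.
From mathcomp Require Import all_boot all_order all_algebra.
From mathcomp Require Import all_classical all_reals all_analysis.
Import Order.TTheory GRing.Theory Num.Theory.
Local Open Scope ring_scope.

Theorem theorem3 (d : measure_display) (T : measurableType d) (R : realType)
  (mu : {measure set T -> \bar R}) (Mk D : finType) (n : nat)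
  (w0 : Mk -> R) (L : nat -> D -> T -> R) (Pb : nat -> D -> T -> R)
  (b : forall i : nat, Mk -> (i.-1).-tuple D -> T -> R) (sigma : nat -> R)
  (Ms : {set Mk * n.-tuple D}) :
  (1 <= n)%N ->
  (0 < #|Mk|)%N ->
  (forall j, 0 <= w0 j) ->
  \sum_(j : Mk) w0 j = 1 ->
  (forall i, (1 <= i <= n)%N -> forall beta x, 0 <= L i beta x) ->
  (forall i, (1 <= i <= n)%N -> forall beta, measurable_fun setT (L i beta)) ->
  (forall i, (1 <= i <= n)%N -> forall beta x, 0 <= Pb i beta x <= 1) ->
  (forall i, (1 <= i <= n)%N -> forall beta, measurable_fun setT (Pb i beta)) ->
  (forall i, (1 <= i <= n)%N -> forall a s x, 0 <= b i a s x) ->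
  (forall i, (1 <= i <= n)%N -> forall a s, measurable_fun setT (b i a s)) ->
  (forall i, (1 <= i <= n)%N -> forall a s,
      (\int[mu]_x (b i a s x)%:E = 1)%E) ->
  (forall i, (1 <= i <= n)%N -> is_max_of (L i) (sigma i)) ->
  let w := fun r : Mk * n.-tuple D => hyp_weight mu w0 L Pb b r.1 r.2 in
  let eta := (\sum_(r : Mk * n.-tuple D) w r)%E in
  let wms := (\sum_(r in Ms) w r)%E in
  (wms <= eta)%E /\
  (eta <= wms + ((#|{: Mk * n.-tuple D}|%:R / #|Mk|%:R
                   - \sum_(r in Ms) w0 r.1)
                  * \prod_(1 <= i < n.+1) sigma i)%:E)%E.
Proof.
move=> n1 Mk0 w00 w0s L0 Lm Pb01 Pbm b0 bm bi Lmax w eta wms.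
have sig0 : forall i, (1 <= i <= n)%N -> 0 <= sigma i.
  move=> i Hi; have [_ [a [x <-]]] := Lmax i Hi; exact: L0.
have Jb : forall i, (1 <= i <= n)%N -> forall beta a s,
    (0 <= \int[mu]_x (L i beta x * Pb i beta x * b i a s x)%:E)%E /\
    (\int[mu]_x (L i beta x * Pb i beta x * b i a s x)%:E <= (sigma i)%:E)%E.
  move=> i Hi beta a s; split.
    apply: integral_ge0 => x _; rewrite lee_fin.
    by rewrite !mulr_ge0 //; [exact: L0 | case/andP: (Pb01 i Hi beta x) | exact: b0].
  apply: (@le_trans _ _ (\int[mu]_x ((sigma i * b i a s x)%:E))%E).
    apply: ge0_le_integral => //.
    - move=> x _; rewrite lee_fin.
      by rewrite !mulr_ge0 //; [exact: L0 | case/andP: (Pb01 i Hi beta x) | exact: b0].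
    - apply/measurable_realfun.measurable_EFinP; apply: measurable_realfun.measurable_funM; last exact: bm.
      by apply: measurable_realfun.measurable_funM; [exact: Lm | exact: Pbm].
    - apply/measurable_realfun.measurable_EFinP; apply: measurable_realfun.measurable_funM; last exact: bm.
      exact: measurable_cst.
    - move=> x _; rewrite lee_fin; apply: ler_wpM2r; first exact: b0.
      have [Lx _] := Lmax i Hi; have [P0 P1] := andP (Pb01 i Hi beta x).
      apply: (le_trans _ (Lx beta x)).
      by rewrite -[leRHS]mulr1; apply: ler_wpM2l => //; exact: L0.
  rewrite (eq_integral (fun x => (sigma i)%:E * (b i a s x)%:E)%E); last by move=> x _; rewrite EFinM.
  rewrite ge0_integralZl //.
  - by rewrite bi // mule1.
  - by apply/measurable_realfun.measurable_EFinP; exact: bm.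
  - by move=> x _; rewrite lee_fin; exact: b0.
  - by rewrite lee_fin; exact: sig0.
have HW : forall i, (i <= n)%N -> forall a (t : i.-tuple D),
    (0 <= hyp_weight mu w0 L Pb b a t)%E /\
    (hyp_weight mu w0 L Pb b a t <= (w0 a * \prod_(1 <= j < i.+1) sigma j)%:E)%E.
  elim=> [|i IH] Hi a t.
    by rewrite /= big_geq // mulr1 lee_fin; split.
  have Hi' : (1 <= i.+1 <= n)%N by rewrite Hi.
  have [IH1 IH2] := IH (ltnW Hi) a (behead_tuple t).
  have [J1 J2] := Jb i.+1 Hi' (thead t) a (behead_tuple t).
  rewrite /=; split; first exact: mule_ge0.
  rewrite big_nat_recr //= mulrA EFinM.
  exact: lee_pmul.
have Pn := HW n (leqnn n).
have w_ge0 : forall r, (0 <= w r)%E by move=> r; have [] := Pn r.1 r.2.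
have etaE : eta = (wms + \sum_(r in ~: Ms) w r)%E.
  rewrite /eta /wms (bigID (mem Ms)) /=.
  congr (_ + _)%E; apply: eq_bigl => r; by rewrite /= ?inE.
rewrite etaE; split; first by apply: leeDl; apply: sume_ge0 => r _; exact: w_ge0.
apply: leeD2l.
set P := \prod_(1 <= i < n.+1) sigma i.
apply: (@le_trans _ _ (\sum_(r in ~: Ms) (w0 r.1 * P)%:E)%E).
  by apply: lee_sum => r _; have [] := Pn r.1 r.2.
rewrite sumEFin lee_fin -mulr_suml; apply: ler_wpM2r.
  by rewrite /P big_seq; apply: prodr_ge0 => i; rewrite mem_index_iota => /andP[Hi1 Hi2]; apply: sig0; rewrite Hi1 -ltnS.
have tot : \sum_(r : Mk * n.-tuple D) w0 r.1 = #|{: n.-tuple D}|%:R.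
  rewrite -(pair_big xpredT xpredT (fun a (t : n.-tuple D) => w0 a)) /=.
  under eq_bigr do rewrite sumr_const.
  by rewrite sumrMnl w0s.
have : \sum_(r : Mk * n.-tuple D) w0 r.1 =
   \sum_(r in Ms) w0 r.1 + \sum_(r in ~: Ms) w0 r.1.
  rewrite (bigID (mem Ms)) /=; congr (_ + _); apply: eq_bigl => r; by rewrite /= ?inE.
rewrite tot => Htot.
have -> : (#|{: Mk * n.-tuple D}|%:R / #|Mk|%:R : R) = #|{: n.-tuple D}|%:R.
  rewrite card_prod natrM mulrC mulKf //.
  by rewrite pnatr_eq0 -lt0n.
by rewrite Htot (addrC (\sum_(r in Ms) w0 r.1)) addrK.
Qed.
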